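(* Let $k$ be an algebraically closed field of characteristic zero and let $X\subset\mathbb P^n$ be a chain of closed subvarieties $X_1,\dots,X_\ell$ with saturated ideal $I_X=\bigcap_i I_{X_i}\subset k[x_0,\dots,x_n]$, such that for some integers $n_0=0<n_1<\cdots<n_\ell=n$ one has $X_i\subset\{x_0=\cdots=x_{n_{i-1}-1}=0,\ x_{n_i+1}=\cdots=x_n=0\}$ for all $i$. Let $\rho:\mathbb G_m\to\mathrm{GL}_{n+1}$ be a one-parameter subgroup diagonalized by $x_0,\dots,x_n$ with weights $(r_0,\dots,r_n)$, and let $\rho_i$ be the restriction of $\rho$ to $\mathrm{GL}(kx_{n_{i-1}}+\cdots+kx_{n_i})$. Regard $X_i$ as the subvariety of $\mathbb P^{n_i-n_{i-1}}$ defined by $I_{X_i}\cap k[x_{n_{i-1}},\dots,x_{n_i}]$. Let $P(m)$ be the Hilbert polynomial of $I_X$ and $P_i(m)$ the Hilbert polynomial of $I_{X_i}\cap k[x_{n_{i-1}},\dots,x_{n_i}]$ as an ideal of $k[x_{n_{i-1}},\dots,x_{n_i}]$. Then for $m$ as below, \[ \mu([X]_m^\star,\rho)=\sum_{i=1}^\ell\mu([X_i]_m^\star,\rho_i)-\sum_{i=1}^\ell\frac{mP_i(m)}{n_i-n_{i-1}+1}\sum_{k=n_{i-1}}^{n_i}r_k+\frac{mP(m)}{n+1}\sum_{i=0}^n r_i+m\sum_{i=1}^{\ell-1}r_{n_i}. \]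
   Context: A chain of subvarieties means $X=\bigcup_iX_i$ and $X_i\cap X_j\neq\emptyset$ iff $|i-j|=1$. Here $m$ is a positive integer at least the Castelnuovo–Mumford regularity of all ideals involved, so that Hilbert points are defined and the dimension of the degree-$m$ part of each quotient ring equals the value of its Hilbert polynomial at $m$. For a homogeneous ideal $J\subset k[y_0,\dots,y_N]$ defining $Y\subset\mathbb P^N$ with Hilbert polynomial $P_Y$, and a one-parameter subgroup $\rho$ diagonal in $y_0,\dots,y_N$ with weights $(r_0,\dots,r_N)$, the Hilbert–Mumford index of the $m$th dual Hilbert point $[Y]_m^\star=[S_m\to S_m/J_m]$ is given by $\mu([Y]_m^\star,\rho)=-\sum_{x^\alpha}\mathrm{wt}_\rho(x^\alpha)+\frac{mP_Y(m)}{N+1}\sum_{i=0}^N r_i$, the sum over degree-$m$ monomials $x^\alpha$ not in $\mathrm{in}_{\prec_\rho}(J)$, where $\mathrm{wt}_\rho(x^\alpha)=\sum\alpha_i r_i$ and $\prec_\rho$ is the $\rho$-weighted order (monomials compared first by $\rho$-weight, ties broken by a fixed monomial order), used consistently for all ideals and restricted to the relevant subrings. *)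

(* Defs.v *)
From HB Require Import structures.
From mathcomp Require Import all_boot all_order all_algebra.
From mathcomp Require Import mpoly.
From Stdlib Require Import ClassicalEpsilon.

Set Implicit Arguments.
Unset Strict Implicit.
Unset Printing Implicit Defensive.

Import Order.TTheory GRing.Theory Num.Theory.
Local Open Scope ring_scope.

Definition bP (Q : Prop) : bool :=
  if excluded_middle_informative Q then true else false.

Section Defs.
Variable (k : fieldType) (N : nat).
Local Notation S := {mpoly k[N]}.
Local Notation mon := 'X_{1..N}.
Local Notation vec := ('I_N -> k).

(* A point of P^{N-1} is represented by a nonzero vector of k^N;
   a subset of P^{N-1} by a predicate on vectors (a cone). *)
Definition nonzero_vec (v : vec) : Prop := exists i, v i != 0.

Definition homogeneous (d : nat) (f : S) : bool :=
  all (fun a : mon => mdeg a == d) (msupp f).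

Definition is_homogeneous (f : S) : Prop := exists d, homogeneous d f.

Definition proj_zero (F : S -> Prop) (v : vec) : Prop :=
  nonzero_vec v /\ forall f, F f -> f.@[v] = 0.

Definition proj_closed (X : vec -> Prop) : Prop :=
  exists F : S -> Prop, (forall f, F f -> is_homogeneous f) /\
    forall v, X v <-> proj_zero F v.

Definition proj_variety (X : vec -> Prop) : Prop :=
  [/\ proj_closed X, exists v, X v &
      forall Y Z, proj_closed Y -> proj_closed Z ->
        (forall v, X v <-> Y v \/ Z v) ->
        (forall v, X v -> Y v) \/ (forall v, X v -> Z v)].

Definition vanishing_ideal (X : vec -> Prop) (f : S) : Prop :=
  forall v, X v -> f.@[v] = 0.

Definition supported (B : pred 'I_N) (a : mon) : bool :=
  [forall i, (a i != 0)%N ==> B i].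

Definition in_subring (B : pred 'I_N) (f : S) : bool :=
  all (supported B) (msupp f).

(* Hilbert function of an ideal J of S_B = k[x_j : j in B]:
   hilb_fun B J d c  <->  dim_k (S_B / J)_d = c, i.e. c is the maximal
   size of a family of degree-d elements of S_B linearly independent
   modulo J. *)
Definition lin_indep_mod (B : pred 'I_N) (J : S -> Prop) (d c : nat) :=
  exists fs : 'I_c -> S,
    (forall i, in_subring B (fs i) /\ homogeneous d (fs i)) /\
    forall cs : 'I_c -> k, J (\sum_i cs i *: fs i) -> forall i, cs i = 0.

Definition hilb_fun (B : pred 'I_N) (J : S -> Prop) (d c : nat) : Prop :=
  lin_indep_mod B J d c /\ ~ lin_indep_mod B J d c.+1.

Definition is_hilb_poly (B : pred 'I_N) (J : S -> Prop) (P : {poly rat}) :=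
  exists d0, forall d, (d0 <= d)%N ->
    exists c, hilb_fun B J d c /\ P.[d%:R] = c%:R.

Definition monomial_order (le : rel mon) : Prop :=
  [/\ reflexive le, antisymmetric le, transitive le, total le &
      (forall a b c : mon, le a b -> le (a + c)%MM (b + c)%MM)] /\
      (forall a : mon, le 0%MM a).

Definition wt (r : 'I_N -> int) (a : mon) : int := \sum_i ((a i)%:Z * r i).

Definition wle (le : rel mon) (r : 'I_N -> int) (a b : mon) : bool :=
  (wt r a < wt r b) || ((wt r a == wt r b) && le a b).

Definition is_lead (le : rel mon) r (f : S) (a : mon) : Prop :=
  a \in msupp f /\ forall b, b \in msupp f -> wle le r b a.

Definition mdivides (b a : mon) : bool := [forall i, (b i <= a i)%N].

Definition in_initial (le : rel mon) r (J : S -> Prop) (a : mon) : Prop :=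
  exists f b, [/\ J f, f != 0, is_lead le r f b & mdivides b a].

(* Hilbert-Mumford index of the m-th dual Hilbert point of the ideal J of
   S_B = k[x_j : j in B], for the one-parameter subgroup of GL(S_B_1)
   with weights (r_j)_{j in B}, P the Hilbert polynomial of J:
   mu = - sum_{x^a deg m in S_B, x^a notin in(J)} wt(x^a)
        + m P(m) / #|B| * sum_{j in B} r_j. *)
Definition hm_index (le : rel mon) (r : 'I_N -> int) (B : pred 'I_N)
    (J : S -> Prop) (P : {poly rat}) (m : nat) : rat :=
  - (\sum_(a : 'X_{1..N < m.+1} |
           [&& mdeg a == m, supported B a & ~~ bP (in_initial le r J a)])
       (wt r a)%:~R)
  + (m%:R * P.[m%:R] / (#|B|)%:R) * (\sum_(j | B j) (r j)%:~R).

End Defs.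

Definition block (n : nat) (nn : nat -> nat) (i : nat) : pred 'I_n.+1 :=
  fun j => (nn i.-1 <= j <= nn i)%N.

(* Main.v *)
Require Import Defs.
From HB Require Import structures.
From mathcomp Require Import all_boot all_order all_algebra.
From mathcomp Require Import mpoly.
From mathcomp Require Import zify.
From mathcomp Require Import ring.
From Stdlib Require Import ClassicalEpsilon.
Import Order.TTheory GRing.Theory Num.Theory.

Module P1.
Local Open Scope ring_scope.
Set Implicit Arguments. Unset Strict Implicit.

Section H.
Variables (k : fieldType) (N : nat).
Implicit Types (f : {mpoly k[N]}) (u : 'I_N -> k).

Lemma eval_scale f u c :
  f.@[fun t => c * u t] =
  \sum_(a <- msupp f) f@_a * \prod_i u i ^+ a i * c ^+ mdeg a.
Proof.
rewrite mevalE; apply: eq_bigr => a _.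
rewrite -mulrA; congr (_ * _).
under eq_bigr do rewrite exprMn.
by rewrite big_split /= prodrXr mdegE mulrC.
Qed.

Lemma homog_eval f u c d : homogeneous d f ->
  f.@[fun t => c * u t] = c ^+ d * f.@[u].
Proof.
move=> /allP hd; rewrite eval_scale mevalE mulr_sumr; apply: eq_big_seq => a ha.
by rewrite (eqP (hd a ha)) mulrC.
Qed.

Lemma cone X u c : proj_closed X -> X u -> c != 0 -> X (fun t => c * u t).
Proof.
move=> [F [hF hX]] /hX [[i hi] hz] hc; apply/hX; split.
  by exists i; rewrite mulf_neq0.
move=> f Ff; have [d hd] := hF f Ff.
by rewrite (homog_eval _ _ hd) (hz f Ff) mulr0.
Qed.
Hypothesis hchar : [pchar k] =i pred0.

Lemma natr_inj (i j : nat) : (i%:R = j%:R :> k) -> i = j.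
Proof.
have h0 := (pcharf0P k).1 hchar.
wlog lij : i j / (i <= j)%N.
  by move=> W e; case/orP: (leq_total i j) => l; [apply: W | symmetry; apply: W].
move=> e; move: (subnK lij) e => <-; rewrite natrD -{1}(add0r (i%:R)).
move/addIr => /esym /eqP; rewrite h0 => /eqP ->; by [].
Qed.

Lemma lam_poly f u : (forall c, c != 0 -> f.@[fun t => c * u t] = 0) ->
  forall d, \sum_(a <- msupp f | mdeg a == d) f@_a * \prod_i u i ^+ a i = 0.
Proof.
move=> hz d.
pose p : {poly k} := \sum_(a <- msupp f) (f@_a * \prod_i u i ^+ a i) *: 'X^(mdeg a).
have hp c : p.[c] = f.@[fun t => c * u t].
  rewrite eval_scale horner_sum; apply: eq_bigr => a _.
  by rewrite hornerZ hornerXn.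
have p0 : p = 0.
  pose rs := [seq (i.+1)%:R : k | i <- iota 0 (size p)].
  apply: (roots_geq_poly_eq0 (rs := rs)).
  - apply/allP => x /mapP [i _ ->]; rewrite /root hp hz //.
    by rewrite ((pcharf0P k).1 hchar).
  - rewrite map_inj_uniq ?iota_uniq // => i j /natr_inj; by case.
  - by rewrite size_map size_iota.
have := congr1 (fun q : {poly k} => q`_d) p0; rewrite coef0 coef_sumMXn.
by under eq_bigl do rewrite andTb.
Qed.
Lemma meval_ext f v w : (forall t, v t = w t) -> f.@[v] = f.@[w].
Proof. by move=> e; rewrite !mevalE; apply: eq_bigr => a _; under eq_bigr do rewrite e. Qed.

Lemma zero_scale X f u c : proj_closed X -> X u -> vanishing_ideal X f ->
  f.@[fun t => c * u t] = 0.
Proof.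
move=> hX Xu hf; have [->|hc] := eqVneq c 0; last by apply: hf; apply: cone.
transitivity (\sum_(a <- msupp f | mdeg a == 0%N) f@_a * \prod_i u i ^+ a i); last first.
  by apply: lam_poly => c' hc'; apply: hf; apply: cone.
rewrite eval_scale [RHS]big_mkcond /=.
apply: eq_bigr => a _; rewrite expr0n; case: (mdeg a == 0%N) => /=.
  by rewrite mulr1.
by rewrite mulr0.
Qed.
End H.

Section Main.
Variables (n ell : nat) (nn : nat -> nat).
Hypothesis hmono : forall i, (i < ell)%N -> (nn i < nn i.+1)%N.

Lemma nn_lt i j : (i < j)%N -> (j <= ell)%N -> (nn i < nn j)%N.
Proof.
move=> lij; elim: j lij => // j IH; rewrite ltnS leq_eqVlt => /orP [/eqP <- | lij] hj.
  exact: hmono.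
apply: ltn_trans (IH lij (ltnW hj)) (hmono hj).
Qed.

Lemma nn_le i j : (i <= j)%N -> (j <= ell)%N -> (nn i <= nn j)%N.
Proof.
rewrite leq_eqVlt => /orP [/eqP -> // | lij] hj; exact/ltnW/nn_lt.
Qed.

Lemma block_inter_lt i j t : (1 <= i)%N -> (i < j)%N -> (j <= ell)%N ->
  (nn i.-1 <= t <= nn i)%N -> (nn j.-1 <= t <= nn j)%N -> j = i.+1 /\ t = nn i.
Proof.
move=> h1 hij hj /andP [_ ht1] /andP [ht2 _].
have hij' : (i <= j.-1)%N by rewrite -ltnS prednK // (leq_ltn_trans _ hij).
have le : (nn j.-1 <= nn i)%N by apply: leq_trans ht2 ht1.
have [lt|gt|eq] := ltngtP i j.-1.
- by have := nn_lt lt (leq_trans (leq_pred j) hj); rewrite ltnNge le.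
- by move: gt; rewrite ltnNge hij'.
split; first by rewrite eq prednK // (leq_ltn_trans _ hij).
by apply/eqP; rewrite eqn_leq ht1 eq ht2.
Qed.

Lemma block_inter i j t : (1 <= i <= ell)%N -> (1 <= j <= ell)%N -> i != j ->
  (nn i.-1 <= t <= nn i)%N -> (nn j.-1 <= t <= nn j)%N ->
  (j = i.+1 /\ t = nn i) \/ (i = j.+1 /\ t = nn j).
Proof.
move=> /andP [hi1 hi2] /andP [hj1 hj2] hij bi bj.
case: (ltngtP i j) hij => // lt _.
  by left; apply: block_inter_lt.
by right; apply: block_inter_lt.
Qed.
End Main.

Section Geo.
Variables (k : fieldType) (hchar : [pchar k] =i pred0).
Variables (n ell : nat) (nn : nat -> nat) (X : nat -> ('I_n.+1 -> k) -> Prop).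
Hypothesis hmono : forall i, (i < ell)%N -> (nn i < nn i.+1)%N.
Hypothesis hvar : forall i, (1 <= i <= ell)%N -> proj_variety (X i).
Hypothesis hsupp : forall i, (1 <= i <= ell)%N -> forall v, X i v ->
     forall j : 'I_n.+1, (j < nn i.-1)%N || (nn i < j)%N -> v j = 0.
Hypothesis hchain : forall i j, (1 <= i <= ell)%N -> (1 <= j <= ell)%N -> i != j ->
     ((exists v, X i v /\ X j v) <-> (i == j.+1) || (j == i.+1)).

Definition IX (f : {mpoly k[n.+1]}) := forall i, (1 <= i <= ell)%N -> vanishing_ideal (X i) f.
Definition JJ i (f : {mpoly k[n.+1]}) := in_subring (block nn i) f /\ vanishing_ideal (X i) f.

Lemma closed_nz (Y : ('I_n.+1 -> k) -> Prop) v : proj_closed Y -> Y v -> exists t, v t != 0.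
Proof. by move=> [F [_ hY]] /hY [h _]. Qed.

Lemma supp_block i v (t : 'I_n.+1) : (1 <= i <= ell)%N -> X i v -> v t != 0 ->
  (nn i.-1 <= t <= nn i)%N.
Proof.
move=> hi Xv; apply: contraNT; rewrite negb_and -!ltnNge => h.
by rewrite (hsupp hi Xv h).
Qed.

Lemma eval_restrict (B : pred 'I_n.+1) (f : {mpoly k[n.+1]}) v w : in_subring B f ->
  (forall t, B t -> v t = w t) -> f.@[v] = f.@[w].
Proof.
move=> /allP hf e; rewrite !mevalE; apply: eq_big_seq => a /hf /forallP ha.
congr (_ * _); apply: eq_bigr => t _.
have := ha t; case: (B t) (e t) => [-> // | _].
by rewrite implybF negbK => /eqP ->; rewrite !expr0.
Qed.

Lemma JsubIX i f : (1 <= i <= ell)%N -> JJ i f -> IX f.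
Proof.
move=> hi [hsub hf] j hj v Xv.
have [e|hij] := eqVneq i j; first by apply: hf; rewrite e.
pose w (t : 'I_n.+1) := if (nn i.-1 <= t <= nn i)%N then v t else 0.
rewrite (eval_restrict (w := w) hsub); last by move=> t bt; rewrite /w; move: bt; rewrite /block => ->.
have [hX [u0 Xu0] _] := hvar hi.
suff [u [c [Xu ew]]] : exists u c, X i u /\ forall t, w t = c * u t.
  by rewrite (meval_ext f ew); apply: (zero_scale hchar c hX Xu hf).
case: (boolP ((i == j.+1) || (j == i.+1))) => hadj; last first.
  exists u0, 0; split => // t; rewrite mul0r /w.
  case: ifP => // bt; apply/eqP; apply: contraNT hadj => vt.
  have bj := supp_block hj Xv vt.
  by case: (block_inter hmono hi hj hij bt bj) => [[e _]|[e _]];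
    rewrite e eqxx ?orbT.
have [v0 [Xi0 Xj0]] := (hchain hi hj hij).2 hadj.
have hXj : proj_closed (X j) by case: (hvar hj).
have [c hc] := closed_nz hX Xi0.
have bic := supp_block hi Xi0 hc.
have bjc := supp_block hj Xj0 hc.
have uniq_t t : (nn i.-1 <= t <= nn i)%N -> (nn j.-1 <= t <= nn j)%N -> t = c.
  move=> b1 b2.
  case: (block_inter hmono hi hj hij b1 b2) => [[e1 e3]|[e1 e3]];
  case: (block_inter hmono hi hj hij bic bjc) => [[e2 e4]|[e2 e4]]; lia.
exists v0, (v c / v0 c); split => // t; rewrite /w.
have [->|htc] := eqVneq t c.
  by rewrite bic mulfVK.
case: ifP => bt.
  have -> : v t = 0.
    apply/eqP; apply: contraNT htc => vt; apply/eqP/val_inj/uniq_t => //.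
    exact: supp_block hj Xv vt.
  have -> : v0 t = 0.
    apply/eqP; apply: contraNT htc => vt; apply/eqP/val_inj/uniq_t => //.
    exact: supp_block hj Xj0 vt.
  by rewrite mulr0.
have -> : v0 t = 0 by apply/eqP; apply: contraFT bt => vt; apply: supp_block hi Xi0 vt.
by rewrite mulr0.
Qed.

Lemma prod_zero i v (a : 'X_{1..n.+1}) : (1 <= i <= ell)%N -> X i v ->
  ~~ supported (block nn i) a -> \prod_t v t ^+ a t = 0.
Proof.
move=> hi Xv /forallPn [t]; rewrite negb_imply => /andP [at0 bt].
apply/eqP/prodf_eq0; exists t => //.
have ht : (t < nn i.-1)%N || (nn i < t)%N.
  by move: bt; rewrite /block /= negb_and -!ltnNge.
rewrite (hsupp hi Xv ht).
by rewrite expr0n (negbTE at0).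
Qed.

Variables (le : rel 'X_{1..n.+1}) (r : 'I_n.+1 -> int).

Lemma proj_init i a : (1 <= i <= ell)%N -> supported (block nn i) a ->
  in_initial le r IX a -> in_initial le r (JJ i) a.
Proof.
move=> hi sa [f [b [hf fnz [bin blead] hdiv]]].
pose s := [seq c <- msupp f | supported (block nn i) c].
pose g : {mpoly k[n.+1]} := \sum_(c <- s) f@_c *: 'X_[c].
have hs : perm_eq (msupp g) s.
  apply: msupp_sumX; first by rewrite filter_uniq // msupp_uniq.
  by move=> c; rewrite mem_filter -mcoeff_msupp => /andP [].
have memg c : (c \in msupp g) = supported (block nn i) c && (c \in msupp f).
  by rewrite (perm_mem hs) mem_filter.
have sb : supported (block nn i) b.
  apply/forallP => t; apply/implyP => bt0.
  move/forallP: sa => /(_ t) /implyP; apply.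
  move/forallP: hdiv => /(_ t) hle; apply: contraNneq bt0 => at0.
  by move: hle; rewrite at0 leqn0.
have bg : b \in msupp g by rewrite memg sb bin.
exists g, b; split => //.
- split.
    by apply/allP => c; rewrite memg => /andP [].
  move=> v Xv; rewrite -(hf i hi v Xv) /g raddf_sum /= mevalE.
  rewrite /s big_filter big_mkcond /=; apply: eq_bigr => c _.
  rewrite mevalZ mevalX; case: ifP => // hc.
  by rewrite (prod_zero hi Xv (negbT hc)) mulr0.
- by apply: contraTneq bg => ->; rewrite msupp0.
- by split => // c; rewrite memg => /andP [_ /blead].
Qed.

Lemma mixed_init a : (forall i, (1 <= i <= ell)%N -> ~~ supported (block nn i) a) ->
  reflexive le -> in_initial le r IX a.
Proof.
move=> hmix hrefl; exists 'X_[a], a; split.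
- move=> i hi v Xv; rewrite mevalX; exact: prod_zero (hmix i hi).
- by apply: contraTneq (mem_head a [::]) => e; rewrite -(msuppX k a) e msupp0.
- split; first by rewrite msuppX mem_head.
  by move=> c; rewrite msuppX inE => /eqP ->; rewrite /wle eqxx hrefl orbT.
- by apply/forallP => t.
Qed.

Lemma J_init i a : (1 <= i <= ell)%N -> in_initial le r (JJ i) a -> in_initial le r IX a.
Proof.
move=> hi [f [b [hf fnz hl hd]]]; exists f, b; split => //; exact: JsubIX hf.
Qed.

Lemma mdeg_single (c : 'I_n.+1) (a : 'X_{1..n.+1}) :
  (forall t, t != c -> a t = 0%N) -> mdeg a = a c.
Proof.
move=> h; rewrite mdegE (bigD1 c) //= big1 ?addn0 // => t; exact: h.
Qed.

Lemma pure_std i (c : 'I_n.+1) (a : 'X_{1..n.+1}) : (1 <= i)%N -> (i < ell)%N -> val c = nn i ->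
  (forall t, t != c -> a t = 0%N) -> ~ in_initial le r IX a.
Proof.
move=> i1 il hc ha [f [b [hf fnz [bin blead] hdiv]]].
have hb t : t != c -> b t = 0%N.
  move=> tc; move/forallP: hdiv => /(_ t); by rewrite ha // leqn0 => /eqP.
have hi : (1 <= i <= ell)%N by rewrite i1 ltnW.
have hi' : (1 <= i.+1 <= ell)%N by rewrite il.
have hii : i != i.+1 by rewrite neq_ltn ltnSn.
have [v0 [X0 X1]] : exists v, X i v /\ X i.+1 v by apply/(hchain hi hi' hii); rewrite eqxx orbT.
have [hX _ _] := hvar hi.
have hv0 t : v0 t != 0 -> t = c.
  move=> vt; apply: val_inj; rewrite hc.
  case: (block_inter hmono hi hi' hii (supp_block hi X0 vt) (supp_block hi' X1 vt)) => [[_ e]|[e _]]; [exact: e | lia].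
have L := lam_poly hchar (f := f) (u := v0)
  (fun c0 hc0 => hf i hi _ (cone hX X0 hc0)) (mdeg b).
move: L; rewrite big_mkcond (bigD1_seq b) ?msupp_uniq //= eqxx [X in _ + X]big1 ?addr0.
  move/eqP; apply/negP; rewrite mulf_neq0 //; first by rewrite -mcoeff_msupp.
  apply/prodf_neq0 => t _.
  have [->|tc] := eqVneq t c.
    rewrite expf_neq0 //; apply: contraT; rewrite negbK => /eqP h0.
    have [t0 ht0] := closed_nz hX X0.
    by move: (ht0); rewrite (hv0 _ ht0) h0 eqxx.
  by rewrite hb // expr0 oner_neq0.
move=> a' na'; case: ifP => // /eqP da'.
suff -> : \prod_t v0 t ^+ a' t = 0 by rewrite mulr0.
case: (pickP (fun t => (t != c) && (a' t != 0%N))) => [t /andP [tc at0] | hnone].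
  apply/eqP/prodf_eq0; exists t => //.
  have -> : v0 t = 0 by apply/eqP; apply: contraNT tc => /hv0 ->; rewrite eqxx.
  by rewrite expr0n (negbTE at0).
exfalso; move/negP: na'; apply; apply/eqP/mnmP => t.
have h0 : forall t, t != c -> a' t = 0%N.
  by move=> t' tc'; move: (hnone t'); rewrite tc' /= => /negbFE /eqP.
have [->|tc] := eqVneq t c; last by rewrite h0 // hb.
by rewrite -(mdeg_single h0) -(mdeg_single hb) da'.
Qed.
End Geo.

Section Comb.
Variables (n ell : nat) (nn : nat -> nat) (m : nat).
Hypothesis hmono : forall i, (i < ell)%N -> (nn i < nn i.+1)%N.
Hypothesis hnl : nn ell = n.
Hypothesis hm : (0 < m)%N.

Definition emon i : 'X_{1..n.+1} := (U_(inord (nn i)) *+ m)%MM.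

Lemma nn_leE i j : (i <= ell)%N -> (j <= ell)%N -> (nn i <= nn j)%N = (i <= j)%N.
Proof.
move=> hi hj; case: (leqP i j) => h; first exact: (nn_le hmono h hj).
by apply/negbTE; rewrite -ltnNge; exact: (nn_lt hmono h hi).
Qed.

Lemma nn_n i : (i <= ell)%N -> (nn i < n.+1)%N.
Proof. by move=> hi; rewrite ltnS -hnl; exact: (nn_le hmono hi (leqnn _)). Qed.

Lemma emonE i t : (i <= ell)%N -> emon i t = if nat_of_ord t == nn i then m else 0%N.
Proof.
move=> hi; rewrite /emon mulmnE mnm1E -(inj_eq val_inj) /= inordK ?nn_n //.
by rewrite eq_sym; case: eqP; rewrite ?mul1n ?mul0n.
Qed.

Lemma supp_emon i j : (1 <= i <= ell)%N -> (j <= ell)%N ->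
  supported (block nn i) (emon j) = (nn i.-1 <= nn j <= nn i)%N.
Proof.
move=> /andP [i1 hi] hj; apply/forallP/idP => [h | hb t].
  have := h (inord (nn j)); rewrite emonE // /block /= inordK ?nn_n //.
  by case: ifP => [_|/eqP //]; rewrite -lt0n hm.
rewrite emonE //; case: ifP => [/eqP e|_] //.
by rewrite -lt0n hm /block /= e.
Qed.

Lemma two_blocks (a : 'X_{1..n.+1}) i j : mdeg a = m -> (1 <= i)%N -> (i < j)%N -> (j <= ell)%N ->
  supported (block nn i) a -> supported (block nn j) a -> j = i.+1 /\ a = emon i.
Proof.
move=> da i1 ij jl /forallP si /forallP sj.
have hin t : a t != 0%N -> val t = nn i /\ j = i.+1.
  move=> at0; have bi := implyP (si t) at0; have bj := implyP (sj t) at0.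
  by have [e1 e2] := block_inter_lt hmono i1 ij jl bi bj.
have [t at0] : exists t, a t != 0%N.
  case: (pickP (fun t => a t != 0%N)) => [t ht|h]; first by exists t.
  move: da; rewrite mdegE big1 => [e|t _]; first by move: hm; rewrite -e.
  by move: (h t) => /negbFE /eqP.
have [ht ji] := hin t at0; split => //.
apply/mnmP => t'; rewrite emonE ?(leq_trans (ltnW ij)) //.
case: eqP => [e | ne].
  have -> : t' = t by apply: val_inj; rewrite /= e ht.
  rewrite -da (@mdeg_single n t) // => t'' nt; apply/eqP; apply: contraNT nt => h.
  by have [e' _] := hin t'' h; apply/eqP/val_inj; rewrite /= e' ht.
by apply/eqP/negPn/negP => h; apply: ne; exact: (hin t' h).1.
Qed.
End Comb.

End P1.
Import P1.

Module P2.
Set Implicit Arguments. Unset Strict Implicit.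

Section Comb2.
Variables (n ell : nat) (nn : nat -> nat) (m : nat).
Hypothesis hmono : forall i, (i < ell)%N -> (nn i < nn i.+1)%N.
Hypothesis hnl : nn ell = n.
Hypothesis hm : (0 < m)%N.
Local Notation E := (emon n nn m).

Lemma emon_inj i j : (i <= ell)%N -> (j <= ell)%N -> (E i == E j) = (i == j).
Proof.
move=> hi hj.  apply/eqP/eqP => [e|->] //. 
have := congr1 (fun a : 'X_{1..n.+1} => a (inord (nn i))) e. 
rewrite !(emonE m hmono hnl) //. 
rewrite inordK; last exact: (nn_n hmono hnl hi). 
rewrite eqxx. 
case: ifP => [/eqP hn' _|_ hm0]; last by move: hm; rewrite hm0. 
by apply/eqP; rewrite eqn_leq -(nn_leE hmono hi hj) -(nn_leE hmono hj hi) hn' leqnn.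
Qed.

Lemma count1 (P : pred nat) i0 lo len : (lo <= i0 < lo + len)%N ->
  {in iota lo len, P =1 pred1 i0} -> count P (iota lo len) = 1%N.
Proof.
move=> hi e; rewrite (eq_in_count e) count_uniq_mem ?iota_uniq //.
by rewrite mem_iota hi.
Qed.

Lemma count_blocks (a : 'X_{1..n.+1}) i0 : mdeg a = m -> (1 <= i0 <= ell)%N ->
  supported (block nn i0) a ->
  count (fun i => supported (block nn i) a) (iota 1 ell) =
  (1 + count (fun i => a == E i) (iota 1 ell.-1))%N.
Proof.
move=> da hi0 sa.
have ell0 : (0 < ell)%N by case/andP: hi0 => h1 h2; apply: leq_trans h1 h2.
case: (boolP (has (fun i => a == E i) (iota 1 ell.-1))) => hh.
  have [i1 hi1 /eqP ea] := hasP hh.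
  move: hi1; rewrite mem_iota => hi1.
  have i11 : (1 <= i1)%N by case/andP: hi1.
  have i1l : (i1 < ell)%N by case/andP: hi1 => _; rewrite add1n (prednK ell0).
  subst a.
  have cR : count (fun i => E i1 == E i) (iota 1 ell.-1) = 1%N.
    apply: count1; first exact: hi1.
    move=> i; rewrite mem_iota => /andP [h1 h2] /=.
    rewrite emon_inj ?(ltnW i1l) // ?eq_sym //.
    by move: h2; rewrite add1n (prednK ell0) => /ltnW.
  rewrite cR.
  have hP : {in iota 1 ell, (fun i => supported (block nn i) (E i1)) =1
              predU (pred1 i1) (pred1 i1.+1)}.
    move=> i; rewrite mem_iota => /andP [h1 h2]; rewrite add1n ltnS in h2.
    rewrite /= (supp_emon hmono hnl hm) ?h1 ?h2 ?(ltnW i1l) //.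
    rewrite (nn_leE hmono) ?(ltnW i1l) ?(leq_trans (leq_pred i) h2) //.
    rewrite (nn_leE hmono) ?(ltnW i1l) //.
    lia.
  rewrite (eq_in_count hP).
  have c1 : count (pred1 i1) (iota 1 ell) = 1%N.
    by apply: count1 => [|i _ //]; rewrite i11 add1n ltnS ltnW.
  have c2 : count (pred1 i1.+1) (iota 1 ell) = 1%N.
    by apply: count1 => [|i _ //]; apply/andP; split => //; rewrite add1n ltnS.
  have c3 : count (predI (pred1 i1) (pred1 i1.+1)) (iota 1 ell) = 0%N.
    apply/eqP; rewrite -leqn0 leqNgt -has_count; apply/hasPn => i _ /=.
    by apply/negP => /andP [/eqP -> /eqP] /n_Sn.
  by have := count_predUI (pred1 i1) (pred1 i1.+1) (iota 1 ell); rewrite c1 c2 c3 addn0.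
have c0 : count (fun i => a == E i) (iota 1 ell.-1) = 0%N.
  by apply/eqP; rewrite -leqn0 leqNgt -has_count.
rewrite c0 addn0 (@count1 _ i0) //.
move=> i; rewrite mem_iota => /andP [h1 h2] /=; rewrite add1n ltnS in h2.
apply/idP/eqP => [si|->] //.
apply/eqP; apply: contraNT hh => ne; apply/hasP.
case: (ltngtP i i0) ne => // lt _.
  have [e ->] := two_blocks hmono hnl hm da h1 lt (proj2 (andP hi0)) si sa.
  exists i; rewrite ?eqxx // mem_iota h1 add1n (prednK ell0).
  by apply: leq_trans lt (proj2 (andP hi0)).
have [e ->] := two_blocks hmono hnl hm da (proj1 (andP hi0)) lt h2 sa si.
exists i0; rewrite ?eqxx // mem_iota (proj1 (andP hi0)) add1n (prednK ell0).
by apply: leq_trans lt h2.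
Qed.
End Comb2.

End P2.
Import P2.

Module P3.
Set Implicit Arguments. Unset Strict Implicit.
Local Open Scope ring_scope.

Lemma bPP (Q : Prop) : reflect Q (bP Q).
Proof. by rewrite /bP; case: excluded_middle_informative => h; constructor. Qed.

Lemma sum_mkcondR (I : finType) (P : pred I) (F : I -> rat) :
  \sum_(a | P a) F a = \sum_a (P a)%:R * F a.
Proof. by rewrite big_mkcond; apply: eq_bigr => a _; case: (P a); rewrite ?mul1r ?mul0r. Qed.

Lemma sum_count (I : Type) (s : seq I) (b : pred I) :
  \sum_(i <- s) ((b i)%:R : rat) = (count b s)%:R.
Proof. by elim: s => [|x s IH]; rewrite ?big_nil // big_cons IH /= natrD. Qed.

Section Key.
Variables (k : fieldType) (hchar : [pchar k] =i pred0).
Variables (n ell : nat) (nn : nat -> nat) (X : nat -> ('I_n.+1 -> k) -> Prop).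
Hypothesis hmono : forall i, (i < ell)%N -> (nn i < nn i.+1)%N.
Hypothesis hnl : nn ell = n.
Hypothesis hvar : forall i, (1 <= i <= ell)%N -> proj_variety (X i).
Hypothesis hsupp : forall i, (1 <= i <= ell)%N -> forall v, X i v ->
     forall j : 'I_n.+1, (j < nn i.-1)%N || (nn i < j)%N -> v j = 0.
Hypothesis hchain : forall i j, (1 <= i <= ell)%N -> (1 <= j <= ell)%N -> i != j ->
     ((exists v, X i v /\ X j v) <-> (i == j.+1) || (j == i.+1)).
Variables (le : rel 'X_{1..n.+1}) (r : 'I_n.+1 -> int) (m : nat).
Hypothesis hrefl : reflexive le.
Hypothesis hm : (0 < m)%N.

Local Notation E := (emon n nn m).
Local Notation IXk := (IX ell X).
Local Notation J := (JJ nn X).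

Definition stdX (a : 'X_{1..n.+1 < m.+1}) :=
  [&& mdeg a == m, supported predT a & ~~ bP (in_initial le r IXk a)].
Definition stdi i (a : 'X_{1..n.+1 < m.+1}) :=
  [&& mdeg a == m, supported (block nn i) a & ~~ bP (in_initial le r (J i) a)].

Lemma mdeg_E i : mdeg (E i) = m.
Proof. by rewrite /emon mdegMn mdeg1 mul1n. Qed.

Lemma PW (a : 'X_{1..n.+1 < m.+1}) :
  count (stdi^~ a) (iota 1 ell) = (stdX a + count (fun i => val a == E i) (iota 1 ell.-1))%N.
Proof.
have cnt0 (P : pred nat) s : {in s, forall i, ~~ P i} -> count P s = 0%N.
  by move=> h; apply/eqP; rewrite -leqn0 leqNgt -has_count; apply/hasPn.
case da: (mdeg a == m); last first.
  rewrite /stdX da /= !cnt0 // => i _.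
    by apply/negP => /eqP ea; move: da; rewrite ea mdeg_E eqxx.
  by rewrite /stdi da.
have ell_pos i : i \in iota 1 ell.-1 -> [/\ (1 <= i)%N, (i < ell)%N & (1 <= i <= ell)%N].
  rewrite mem_iota; case: (ell) => [|l] /= /andP [h1 h2]; first by move: h2; rewrite addn0 ltnNge h1.
  have h3 : (i < l.+1)%N by rewrite -add1n.
  by split => //; rewrite h1 (ltnW h3).
case: (bPP (in_initial le r IXk a)) => hI.
  rewrite /stdX da /= (introT (bPP _) hI) andbF /= !cnt0 //.
    move=> i hi; have [i1 il i1l] := ell_pos i hi; apply/negP => /eqP ea.
    apply: (pure_std hchar hmono hvar hsupp hchain (le := le) (r := r) (i := i)
              (c := inord (nn i)) (a := E i) i1 il); last by rewrite -ea.
      by rewrite /= inordK // (nn_n hmono hnl (ltnW il)).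
    move=> t tc; rewrite (emonE m hmono hnl _ (ltnW il)); case: ifP => // /eqP e.
    have et : t = inord (nn i).
      by apply: val_inj; rewrite /= inordK // (nn_n hmono hnl (ltnW il)).
    by move: tc; rewrite et eqxx.
  move=> i; rewrite mem_iota => hi; rewrite /stdi da /=.
  have hi' : (1 <= i <= ell)%N by move: hi; rewrite add1n ltnS.
  apply/negP => /andP [si /negP hJ]; apply: hJ; apply/bPP.
  exact: (proj_init hsupp hi' si hI).
rewrite /stdX da /=; have -> : ~~ bP (in_initial le r IXk a) by apply/negP => /bPP.
have -> : count (stdi^~ a) (iota 1 ell) = count (fun i => supported (block nn i) a) (iota 1 ell).
  apply: eq_in_count => i; rewrite mem_iota add1n ltnS => hi; rewrite /stdi da /=.
  case: (supported _ a) => //=; apply/negP => /bPP hJ; apply: hI.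
  exact: (J_init hchar hmono hvar hsupp hchain hi hJ).
case: (boolP (has (fun i => supported (block nn i) a) (iota 1 ell))) => hh.
  have [i0 /[!mem_iota] hi0 si0] := hasP hh.
  rewrite add1n ltnS in hi0.
  have -> : supported predT a by apply/forallP => t; rewrite implybT.
  exact: (count_blocks hmono hnl hm (eqP da) hi0 si0).
exfalso; apply: hI; apply: (mixed_init hsupp) => // i hi.
by move/hasPn: hh; apply; rewrite mem_iota add1n ltnS.
Qed.

Lemma mdeg_E_lt i : (mdeg (E i) < m.+1)%N.
Proof. by rewrite mdeg_E. Qed.

Definition eb i : 'X_{1..n.+1 < m.+1} := BMultinom (mdeg_E_lt i).

Lemma wt_E i : (i <= ell)%N -> wt r (E i) = (m%:Z * r (inord (nn i)))%R.
Proof.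
move=> hi; rewrite /wt (bigD1 (inord (nn i))) //= big1 ?addr0.
  by rewrite (emonE m hmono hnl) // inordK ?(nn_n hmono hnl) // eqxx.
move=> t tc; rewrite (emonE m hmono hnl) //; case: ifP => [/eqP e|]; last by rewrite mul0r.
by move: tc; rewrite (_ : t = inord (nn i)) ?eqxx //; apply: val_inj;
   rewrite /= inordK // (nn_n hmono hnl).
Qed.

Lemma Key :
  \sum_(1 <= i < ell.+1) \sum_(a : 'X_{1..n.+1 < m.+1} | stdi i a) ((wt r a)%:~R : rat)
  = \sum_(a | stdX a) (wt r a)%:~R + m%:R * \sum_(1 <= i < ell) ((r (inord (nn i)))%:~R : rat).
Proof.
set w := fun a : 'X_{1..n.+1 < m.+1} => ((wt r a)%:~R : rat).
rewrite /index_iota subSS subn0.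
under eq_bigr do rewrite sum_mkcondR.
rewrite exchange_big /=.
under eq_bigr do rewrite -mulr_suml sum_count PW natrD mulrDl.
rewrite big_split /= -sum_mkcondR; congr (_ + _).
under eq_bigr do rewrite -sum_count mulr_suml.
rewrite exchange_big /= subn1 mulr_sumr; apply: eq_big_seq => i.
rewrite mem_iota => /andP [h1 h2].
have hi : (i <= ell)%N.
  by move: h2; case: (ell) => [|l] //=; rewrite add1n ltnS => /leqW.
under eq_bigr => a _ do rewrite (_ : (val a == E i) = (a == eb i)) ?bmeqP //.
rewrite -sum_mkcondR big_pred1_eq /w /= wt_E // intrM.
by [].
Qed.
End Key.

End P3.
Import P3.

Module P4.
Set Implicit Arguments. Unset Strict Implicit.

Lemma card_interval (n a b : nat) : (a <= b <= n)%N ->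
  #|(fun j : 'I_n.+1 => (a <= j <= b)%N)| = (b - a + 1)%N.
Proof.
move=> /andP [hab hbn].
rewrite -sum1_card.
rewrite (eq_bigl (fun j : 'I_n.+1 => (a <= j <= b)%N)) //.
rewrite -(big_mkord (fun j => (a <= j <= b)%N) (fun _ => 1%N)) sum1_count.
rewrite /index_iota subn0.
have -> : n.+1 = (a + ((b - a + 1) + (n - b)))%N by lia.
rewrite iotaD count_cat iotaD count_cat add0n.
rewrite (@eq_in_count _ _ pred0) ?count_pred0; last by move=> j; rewrite mem_iota /=; lia.
rewrite [X in (_ + (_ + X))%N](@eq_in_count _ _ pred0) ?count_pred0; last by move=> j; rewrite mem_iota /=; lia.
rewrite (@eq_in_count _ _ predT) ?count_predT ?size_iota ?addn0 //.
by move=> j; rewrite mem_iota /=; lia.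
Qed.

End P4.
Import P4.

Local Open Scope ring_scope.

Theorem proposition1p6
  (k : closedFieldType) (hchar : [pchar k] =i pred0)
  (n ell : nat) (nn : nat -> nat)
  (X : nat -> ('I_n.+1 -> k) -> Prop)
  (le : rel 'X_{1..n.+1}) (r : 'I_n.+1 -> int)
  (P : {poly rat}) (Ps : nat -> {poly rat}) (m : nat) :
  (0 < ell)%N ->
  nn 0%N = 0%N -> nn ell = n ->
  (forall i, (i < ell)%N -> (nn i < nn i.+1)%N) ->
  (forall i, (1 <= i <= ell)%N -> proj_variety (X i)) ->
  (forall i, (1 <= i <= ell)%N -> forall v, X i v ->
     forall j : 'I_n.+1, (j < nn i.-1)%N || (nn i < j)%N -> v j = 0) ->
  (forall i j, (1 <= i <= ell)%N -> (1 <= j <= ell)%N -> i != j ->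
     ((exists v, X i v /\ X j v) <-> (i == j.+1) || (j == i.+1))) ->
  monomial_order le ->
  let IX := fun f : {mpoly k[n.+1]} =>
    forall i, (1 <= i <= ell)%N -> vanishing_ideal (X i) f in
  let J := fun (i : nat) (f : {mpoly k[n.+1]}) =>
    in_subring (block nn i) f /\ vanishing_ideal (X i) f in
  is_hilb_poly predT IX P ->
  (forall i, (1 <= i <= ell)%N -> is_hilb_poly (block nn i) (J i) (Ps i)) ->
  (0 < m)%N ->
  (forall d, (m <= d)%N -> exists c, hilb_fun predT IX d c /\ P.[d%:R] = c%:R) ->
  (forall i, (1 <= i <= ell)%N -> forall d, (m <= d)%N ->
     exists c, hilb_fun (block nn i) (J i) d c /\ (Ps i).[d%:R] = c%:R) ->
  hm_index le r predT IX P m =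
    \sum_(1 <= i < ell.+1) hm_index le r (block nn i) (J i) (Ps i) m
    - \sum_(1 <= i < ell.+1)
        (m%:R * (Ps i).[m%:R] / (nn i - nn i.-1 + 1)%:R
         * \sum_(j < n.+1 | (nn i.-1 <= j <= nn i)%N) (r j)%:~R)
    + m%:R * P.[m%:R] / (n + 1)%:R * \sum_(j < n.+1) (r j)%:~R
    + m%:R * \sum_(1 <= i < ell) (r (inord (nn i)))%:~R.
Proof.
move=> hell hn0 hnl hmono hvar hsupp hchain hord IX J _ _ hm _ _.
have hrefl : reflexive le by case: hord => [[]].
have K := Key hchar hmono hnl hvar hsupp hchain r hrefl hm.
rewrite /stdi /stdX in K.
rewrite /hm_index big_split /= sumrN.
rewrite K.
have -> : #|(predT : pred 'I_n.+1)| = (n + 1)%N by rewrite cardT size_enum_ord addn1.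
have -> : \sum_(1 <= i < ell.+1)
     (m%:R * (Ps i).[m%:R] / (#|@block n nn i|)%:R * \sum_(j | @block n nn i j) ((r j)%:~R : rat)) =
   \sum_(1 <= i < ell.+1)
        (m%:R * (Ps i).[m%:R] / (nn i - nn i.-1 + 1)%:R
         * \sum_(j < n.+1 | (nn i.-1 <= j <= nn i)%N) (r j)%:~R).
  rewrite big_nat [RHS]big_nat; apply: eq_bigr => i /andP [h1 h2]; rewrite ltnS in h2.

  rewrite /block card_interval //.
  rewrite (nn_le hmono (leq_pred i) h2) /=.
  by rewrite -hnl (nn_le hmono h2 (leqnn _)).
set S := \sum_(a | _) _.
set R := \sum_(1 <= i < ell) _.
set T := \sum_(1 <= i < ell.+1) _.
set U := _ * \sum_(j | predT j) _.
have -> : U = m%:R * P.[m%:R] / (n + 1)%:R * \sum_(j < n.+1) (r j)%:~R by [].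
ring.
Qed.
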